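(* Let $\beta<1$, let $\boldsymbol\theta\in\mathbb R^d$ and $\mathbf X^n=(\mathbf X_1,\dots,\mathbf X_n)\in(\mathbb R^d)^n$ be arbitrary deterministic values, and let $\mathbf W^n\sim\mathbb Q_{\boldsymbol\theta}=\mathbb Q_{\boldsymbol\theta,\beta,\mathbf A_n,\mathbf X^n}$. Let $m_i(\mathbf W^n)=\sum_{j\ne i}A_n(i,j)W_j$ and $C_1(\boldsymbol\theta,\mathbf X^n)=\sum_{i=1}^n\big[\sum_{j=1}^nA_n(i,j)\tanh(\boldsymbol\theta^\top\mathbf X_j)\big]^2$. Then, with constants depending only on $\beta$: (a) $\mathbb E^{\mathbb Q_{\boldsymbol\theta}}\big[\sum_{i=1}^nm_i^2(\mathbf W^n)\big]\lesssim n\alpha_n+C_1(\boldsymbol\theta,\mathbf X^n)$; (b) for every $\mathbf d=(d_1,\dots,d_n)\in\mathbb R^n$, $$\Big|\mathbb E^{\mathbb Q_{\boldsymbol\theta}}\sum_{i=1}^nd_i\big(W_i-\tanh(\boldsymbol\theta^\top\mathbf X_i)\big)\Big|\lesssim\|\mathbf d\|\big(1+\sqrt{n\alpha_n^2}+\sqrt{C_1(\boldsymbol\theta,\mathbf X^n)}\big).$$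
   Context: $\mathbf A_n$ is a symmetric $n\times n$ matrix with nonnegative entries and zero diagonal, with $\lim_n\|\mathbf A_n\|_\infty=1$ (maximum row sum tends to 1); $\alpha_n=\max_i\sum_jA_n(i,j)^2$. The random field Ising model $\mathbb Q_{\boldsymbol\theta,\beta,\mathbf A_n,\mathbf X^n}$ is the probability on $\{-1,1\}^n$ with $\mathbb Q(\mathbf w)\propto\exp\big(\frac\beta2\mathbf w^\top\mathbf A_n\mathbf w+\boldsymbol\theta^\top\sum_i\mathbf X_iw_i\big)$; $\mathbb E^{\mathbb Q_{\boldsymbol\theta}}$ is expectation under it. $\lesssim$ means inequality up to a multiplicative constant. *)

(* Defs.v *)
From HB Require Import structures.
From mathcomp Require Import all_boot all_order all_algebra.
From mathcomp Require Import all_classical all_reals all_analysis.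
Set Implicit Arguments. Unset Strict Implicit. Unset Printing Implicit Defensive.
Import Order.TTheory GRing.Theory Num.Theory.
Local Open Scope ring_scope.

Section RFIM.
Variable R : realType.

Definition tanh (x : R) : R := (expR x - expR (- x)) / (expR x + expR (- x)).

Definition spin (b : bool) : R := if b then 1 else -1.

(** configurations in {-1,1}^n, encoded as boolean finite functions *)
Definition config (n : nat) := {ffun 'I_n -> bool}.

Definition dotp (d : nat) (u v : 'rV[R]_d) : R := \sum_(k < d) u 0 k * v 0 k.

Definition infnorm (n : nat) (A : 'M[R]_n) : R :=
  \big[Num.max/0]_(i < n) \sum_(j < n) `|A i j|.

Definition alphaA (n : nat) (A : 'M[R]_n) : R :=
  \big[Num.max/0]_(i < n) \sum_(j < n) (A i j) ^+ 2.

Definition rfim_weight (n d : nat) (beta : R) (A : 'M[R]_n) (theta : 'rV[R]_d)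
    (X : 'I_n -> 'rV[R]_d) (w : config n) : R :=
  expR (beta / 2 * (\sum_(i < n) \sum_(j < n) spin (w i) * A i j * spin (w j))
        + \sum_(i < n) dotp theta (X i) * spin (w i)).

Definition rfim_E (n d : nat) (beta : R) (A : 'M[R]_n) (theta : 'rV[R]_d)
    (X : 'I_n -> 'rV[R]_d) (f : config n -> R) : R :=
  (\sum_(w : config n) rfim_weight beta A theta X w * f w)
  / (\sum_(w : config n) rfim_weight beta A theta X w).

Definition mloc (n : nat) (A : 'M[R]_n) (w : config n) (i : 'I_n) : R :=
  \sum_(j < n | j != i) A i j * spin (w j).

Definition C1 (n d : nat) (A : 'M[R]_n) (theta : 'rV[R]_d) (X : 'I_n -> 'rV[R]_d) : R :=
  \sum_(i < n) (\sum_(j < n) A i j * tanh (dotp theta (X j))) ^+ 2.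

Definition enorm (n : nat) (v : 'I_n -> R) : R := Num.sqrt (\sum_(i < n) v i ^+ 2).

Definition admissible (n : nat) (A : 'M[R]_n) : Prop :=
  A^T = A /\ (forall i j, 0 <= A i j) /\ (forall i, A i i = 0).

End RFIM.

(* Main.v *)
Require Import Defs.
From HB Require Import structures.
From mathcomp Require Import all_boot all_order all_algebra.
From mathcomp Require Import all_classical all_reals all_analysis.
From mathcomp Require Import ring lra.
Import Order.TTheory GRing.Theory Num.Theory.
Import numFieldNormedType.Exports.
Local Open Scope classical_set_scope.
Local Open Scope ring_scope.

Section Tanh.
Variable R : realType.
Implicit Types x y z : R.

Lemma tanh_alt x : tanh x = 1 - 2 / (expR x * expR x + 1).
Proof.
rewrite /tanh expRN.
have h := expR_gt0 x.
have h2 : 0 < expR x * expR x + 1.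
  by apply: addr_gt0 => //; apply: mulr_gt0.
field; by rewrite !gt_eqF.
Qed.

Lemma exd (f : R -> R) x df : is_derive x 1 f df -> derivable f x 1.
Proof. by move=> h; apply: (@ex_derive _ _ _ _ _ _ _ h). Qed.
Lemma dval (f : R -> R) x df : is_derive x 1 f df -> 'D_1 f x = df.
Proof. by move=> h; apply: (@derive_val _ _ _ _ _ _ _ h). Qed.

Arguments exd {f x df}. Arguments dval {f x df}.

Lemma is_derive_tanh x : is_derive x 1 (@tanh R) (1 - tanh x ^+ 2).
Proof.
have -> : @tanh R = (fun y => 1 - 2 * (expR y * expR y + 1)^-1).
  by apply/funext => y; rewrite tanh_alt.
have hx := expR_gt0 x.
have hp : 0 < expR x * expR x + 1 by apply: addr_gt0 => //; apply: mulr_gt0.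
pose p := fun y : R => expR y * expR y + 1.
have dp : is_derive x 1 p (expR x *: expR x + expR x *: expR x + 0).
  exact: (@is_deriveD _ _ _ (expR * expR) (cst 1) x 1 _ _ (is_deriveM _ _) (is_derive_cst _ _ _)).
have dq : is_derive x 1 (fun y => (p y)^-1) (- (p x) ^- 2 *: (expR x *: expR x + expR x *: expR x + 0)).
  apply: DeriveDef.
    by apply: derivableV; [rewrite gt_eqF | exact: exd dp].
  rewrite deriveV; first by rewrite (dval dp).
    by rewrite gt_eqF.
  exact: exd dp.
have := @is_deriveB R R R (cst (1:R)) (2 *: (fun y => (p y)^-1)) x 1 _ _ (is_derive_cst _ _ _) (@is_deriveZ _ _ _ (fun y => (p y)^-1) 2 x 1 _ dq).
move=> h.
have -> : (fun y => 1 - 2 / (expR y * expR y + 1)) = (cst 1 - 2 *: (fun y => (p y)^-1)) :> (R -> R).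
  by apply/funext => y.
suff -> : (1 - (1 - 2 / (expR x * expR x + 1)) ^+ 2) = (0 - 2 *: (- p x ^- 2 *: (expR x *: expR x + expR x *: expR x + 0))) :> R by exact: h.
rewrite /p /= !scalerA /GRing.scale /=. field; by rewrite gt_eqF.
Qed.


Lemma tanh_le1 x : `|tanh x| <= 1.
Proof.
rewrite tanh_alt.
have hx := expR_gt0 x.
have h : 0 < expR x * expR x + 1 by apply: addr_gt0 => //; apply: mulr_gt0.
have h1 : 0 < 2 / (expR x * expR x + 1) by apply: divr_gt0.
have h2 : 2 / (expR x * expR x + 1) <= 2.
  rewrite ler_pdivrMr // ler_peMr // lerDr. by apply: mulr_ge0; apply: expR_ge0.
rewrite ler_norml; apply/andP; split; lra.
Qed.

Lemma tanh0 : tanh (0:R) = 0.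
Proof. by rewrite /tanh oppr0 subrr mul0r. Qed.

Lemma mvt_bound (f df : R -> R) (K x y : R) :
  (forall z, is_derive z 1 f (df z)) ->
  (forall z, `|z - x| <= `|y - x| -> `|df z| <= K) ->
  `|f y - f x| <= K * `|y - x|.
Proof.
move=> hd hK.
have cont : forall a b, {within `[a, b], continuous f}.
  move=> a b; apply: derivable_within_continuous => z _; exact: exd (hd z).
case: (ltrgtP x y) => [xy|yx|<-].
- have [c cin ->] := MVT xy (fun z _ => hd z) (cont x y).
  have hyx : 0 <= y - x by rewrite subr_ge0 ltW.
  rewrite normrM (ger0_norm hyx); apply: ler_wpM2r => //; apply: hK.
  move: cin; rewrite in_itv /= => /andP[h1 h2].
  rewrite !ger0_norm; lra.
- have [c cin eq] := MVT yx (fun z _ => hd z) (cont y x).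
  have hyx : 0 <= x - y by rewrite subr_ge0 ltW.
  rewrite distrC eq normrM (ger0_norm hyx); apply: ler_wpM2r => //; apply: hK.
  move: cin; rewrite in_itv /= => /andP[h1 h2].
  rewrite ler0_norm ?ltr0_norm; lra.
- by rewrite subrr normr0 mulr0.
Qed.

Lemma tanh_lip x y : `|tanh y - tanh x| <= `|y - x|.
Proof.
rewrite -[X in _ <= X]mul1r; apply: (@mvt_bound _ (fun z => 1 - tanh z ^+ 2)).
  exact: is_derive_tanh.
move=> z _.
have := tanh_le1 z; rewrite ler_norml => /andP[h1 h2].
rewrite ler_norml; apply/andP; split; nra.
Qed.

Lemma tanh_abs y : `|tanh y| <= `|y|.
Proof. by have := tanh_lip 0 y; rewrite tanh0 !subr0. Qed.

Lemma tanh_lin y : `|tanh y - y| <= y ^+ 2.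
Proof.
have -> : tanh y - y = (tanh y - y) - (tanh 0 - 0) by rewrite tanh0 subr0 subr0.
have -> : y ^+ 2 = `|y| * `|y - 0| by rewrite subr0 -normrM -expr2 ger0_norm ?sqr_ge0.
apply: (@mvt_bound (fun z => tanh z - z) (fun z => (1 - tanh z ^+ 2) - 1)).
  move=> z; have h := (@is_deriveB R R R (@tanh R) id z 1 _ _ (is_derive_tanh z) (is_derive_id _ _)).
  exact: h.
move=> z; rewrite !subr0 => hz.
rewrite addrAC subrr add0r normrN normrX.
have h1 := tanh_le1 z. have h2 := tanh_abs z.
have h0 : 0 <= `|tanh z| by [].
rewrite expr2; apply: le_trans hz; apply: le_trans h2.
by rewrite ler_piMl.
Qed.


Lemma tanh_add c y : tanh (c + y) - tanh c = tanh y * (1 - tanh c * tanh (c + y)).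
Proof.
rewrite !tanh_alt expRD.
have hc := expR_gt0 c; have hy := expR_gt0 y.
have h1 : 0 < expR c * expR c + 1 by apply: addr_gt0 => //; apply: mulr_gt0.
have h2 : 0 < expR y * expR y + 1 by apply: addr_gt0 => //; apply: mulr_gt0.
have h3 : 0 < expR c * expR y * (expR c * expR y) + 1.
  by apply: addr_gt0 => //; apply: mulr_gt0; apply: mulr_gt0.
field; by rewrite !gt_eqF.
Qed.

Lemma tanh_taylor c y : `|tanh (c + y) - tanh c - (1 - tanh c ^+ 2) * y| <= 2 * y ^+ 2.
Proof.
set T := tanh (c + y); set t := tanh c.
have -> : T - t - (1 - t ^+ 2) * y = (1 - t ^+ 2) * (tanh y - y) - t * tanh y * (T - t).
  have E := tanh_add c y; rewrite -/T -/t in E.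
  rewrite {1}E; ring.
have ht := tanh_le1 c; rewrite -/t in ht.
have h1 : `|1 - t ^+ 2| <= 1.
  move: ht; rewrite ler_norml => /andP[a b]; rewrite ler_norml; apply/andP; split; nra.
have h2 := tanh_lin y. have h3 := tanh_abs y.
have h4 : `|T - t| <= `|y|.
  by have := tanh_lip c (c + y); rewrite -/T -/t addrAC subrr add0r.
set ty := tanh y in h2 h3 *.
clearbody T t ty.
apply: le_trans (ler_normB _ _) _.
rewrite !normrM.
have e : 2 * y ^+ 2 = 1 * y ^+ 2 + 1 * `|y| * `|y|.
  by rewrite !mul1r -normrM -expr2 ger0_norm ?sqr_ge0 // mulr2n mulrDl mul1r.
rewrite e; apply: lerD.
  by apply: ler_pM => //.
apply: ler_pM => //. exact: ler_pM.
Qed.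

End Tanh.

Section Gen.
Variables (R : realType) (n : nat).
Implicit Types (x y z f g w : 'I_n -> R).

Lemma sqr_sum x : (\sum_(j < n) x j) ^+ 2 = \sum_(j < n) \sum_(k < n) x j * x k.
Proof. by rewrite expr2 mulr_suml; apply: eq_bigr => j _; rewrite mulr_sumr. Qed.

Lemma sym_le x (P : 'I_n -> 'I_n -> R) :
  (forall j k, 2 * (x j * x k) <= P j k + P k j) ->
  (\sum_(j < n) x j) ^+ 2 <= \sum_(j < n) \sum_(k < n) P j k.
Proof.
move=> h; rewrite sqr_sum.
have e : \sum_(j < n) \sum_(k < n) P k j = \sum_(j < n) \sum_(k < n) P j k by rewrite exchange_big.
have : 2 * \sum_(j < n) \sum_(k < n) x j * x k <=
       \sum_(j < n) \sum_(k < n) P j k + \sum_(j < n) \sum_(k < n) P k j.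
  rewrite -big_split mulr_sumr; apply: ler_sum => j _.
  by rewrite -big_split mulr_sumr; apply: ler_sum => k _; apply: h.
rewrite e; lra.
Qed.

Lemma wCS w f : (forall j, 0 <= w j) ->
  (\sum_(j < n) w j * f j) ^+ 2 <= (\sum_(j < n) w j) * (\sum_(j < n) w j * f j ^+ 2).
Proof.
move=> hw; rewrite mulr_suml.
under [X in _ <= X]eq_bigr do rewrite mulr_sumr.
apply: (sym_le (fun j => w j * f j) (fun j k => w j * (w k * f k ^+ 2))) => j k.
have := hw j; have := hw k => a b.
have : 0 <= w j * w k * (f j - f k) ^+ 2 by rewrite mulr_ge0 ?sqr_ge0 ?mulr_ge0.
move=> H; rewrite -subr_ge0; apply: le_trans H _; rewrite le_eqVlt; apply/orP; left; apply/eqP; ring.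
Qed.

Lemma CS f g : (\sum_(j < n) f j * g j) ^+ 2 <= (\sum_(j < n) f j ^+ 2) * (\sum_(j < n) g j ^+ 2).
Proof.
rewrite mulr_suml.
under [X in _ <= X]eq_bigr do rewrite mulr_sumr.
apply: (sym_le (fun j => f j * g j) (fun j k => f j ^+ 2 * g k ^+ 2)) => j k.
have : 0 <= (f j * g k - f k * g j) ^+ 2 by rewrite sqr_ge0.
move=> H; rewrite -subr_ge0; apply: le_trans H _; rewrite le_eqVlt; apply/orP; left; apply/eqP; ring.
Qed.

Lemma sq_split (p q lam : R) : 0 < lam < 1 -> (p + q) ^+ 2 <= p ^+ 2 / lam + q ^+ 2 / (1 - lam).
Proof.
move=> /andP[l0 l1].
have h1 : 0 < 1 - lam by rewrite subr_gt0.
have key : 0 <= (p * (1 - lam) - q * lam) ^+ 2 / (lam * (1 - lam)).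
  by rewrite divr_ge0 ?sqr_ge0 // mulr_ge0 // ltW.
rewrite -subr_ge0; apply: le_trans key _; rewrite le_eqVlt; apply/orP; left; apply/eqP.
by field; rewrite !gt_eqF.
Qed.

Lemma contract x z y (lam : R) : 0 < lam < 1 ->
  (forall i, `|x i| <= `|z i| + `|y i|) ->
  \sum_(i < n) z i ^+ 2 <= lam ^+ 2 * \sum_(i < n) x i ^+ 2 ->
  \sum_(i < n) x i ^+ 2 <= (\sum_(i < n) y i ^+ 2) / (1 - lam) ^+ 2.
Proof.
move=> hl hxi hz.
have /andP[l0 l1] := hl.
have h1 : 0 < 1 - lam by rewrite subr_gt0.
have hx : \sum_i x i ^+ 2 <= (\sum_i z i ^+ 2) / lam + (\sum_i y i ^+ 2) / (1 - lam).
  rewrite !mulr_suml -big_split; apply: ler_sum => i _.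
  have H := sq_split `|z i| `|y i| lam hl; rewrite !real_normK ?num_real // in H.
  apply: le_trans H.
  rewrite -[X in X <= _]real_normK ?num_real //.
  have := hxi i; have := normr_ge0 (x i); nra.
set X := \sum_i x i ^+ 2 in hx hz *; set Y := \sum_i y i ^+ 2 in hx *; set Zz := \sum_i z i ^+ 2 in hx hz.
have hzl : Zz / lam <= lam * X.
  rewrite ler_pdivrMr //; apply: le_trans hz _; rewrite le_eqVlt; apply/orP; left; apply/eqP; ring.
have : X * (1 - lam) <= Y / (1 - lam).
  have : X <= lam * X + Y / (1 - lam) by apply: le_trans hx _; rewrite lerD2r.
  lra.
move=> H; rewrite ler_pdivlMr ?exprn_gt0 //; rewrite ler_pdivlMr // in H.
by rewrite expr2 mulrA.
Qed.

End Gen.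
Arguments wCS {R n}. Arguments CS {R n}. Arguments contract {R n}. Arguments sym_le {R n}. Arguments sq_split {R}.


Section Model.
Variables (R : realType) (n : nat) (beta : R) (A : 'M[R]_n) (c : 'I_n -> R).

Definition sp (w : config n) i := spin R (w i).
Definition Qf (w : config n) := \sum_(i < n) \sum_(j < n) sp w i * A i j * sp w j.
Definition Lf (w : config n) := \sum_(i < n) c i * sp w i.
Definition wt (w : config n) := expR (beta / 2 * Qf w + Lf w).
Definition Zs := \sum_(w : config n) wt w.
Definition Ex (f : config n -> R) := (\sum_(w : config n) wt w * f w) / Zs.

Lemma wt_gt0 w : 0 < wt w. Proof. exact: expR_gt0. Qed.

Lemma Zs_gt0 : 0 < Zs.
Proof.
rewrite /Zs (bigD1 [ffun=> true]) //=; apply: (lt_le_trans (wt_gt0 [ffun=> true])).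
rewrite lerDl; apply: sumr_ge0 => w _; apply: ltW; apply: wt_gt0.
Qed.

Lemma Ex_ext f g : (forall w, f w = g w) -> Ex f = Ex g.
Proof. by move=> h; rewrite /Ex; congr (_ / _); apply: eq_bigr => w _; rewrite h. Qed.

Lemma ExD f g : Ex (fun w => f w + g w) = Ex f + Ex g.
Proof. by rewrite /Ex -mulrDl -big_split /=; congr (_ / _); apply: eq_bigr => w _; rewrite mulrDr. Qed.

Lemma ExN f : Ex (fun w => - f w) = - Ex f.
Proof. by rewrite /Ex -mulNr -sumrN; congr (_ / _); apply: eq_bigr => w _; rewrite mulrN. Qed.

Lemma ExB f g : Ex (fun w => f w - g w) = Ex f - Ex g.
Proof. by rewrite ExD ExN. Qed.

Lemma ExZ k f : Ex (fun w => k * f w) = k * Ex f.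
Proof. by rewrite /Ex mulrA mulr_sumr; congr (_ / _); apply: eq_bigr => w _; rewrite mulrCA. Qed.

Lemma Ex_sum (F : 'I_n -> config n -> R) : Ex (fun w => \sum_(i < n) F i w) = \sum_(i < n) Ex (F i).
Proof.
rewrite /Ex -mulr_suml; congr (_ / _).
rewrite (eq_bigr (fun w => \sum_(i < n) wt w * F i w)); last by move=> w _; rewrite mulr_sumr.
exact: exchange_big.
Qed.

Lemma Ex_cst k : Ex (fun _ => k) = k.
Proof. by rewrite /Ex -mulr_suml -/Zs mulrC mulKf // lt0r_neq0 // Zs_gt0. Qed.

Lemma Ex_le f g : (forall w, f w <= g w) -> Ex f <= Ex g.
Proof.
move=> h; rewrite /Ex; apply: ler_wpM2r; first by rewrite invr_ge0 ltW // Zs_gt0.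
by apply: ler_sum => w _; apply: ler_wpM2l; [apply: ltW; apply: wt_gt0 | apply: h].
Qed.

Lemma Ex_norm f : `|Ex f| <= Ex (fun w => `|f w|).
Proof.
rewrite ler_norml; apply/andP; split.
  by rewrite -ExN; apply: Ex_le => w; rewrite lerNl -normrN ler_norm.
by apply: Ex_le => w; apply: ler_norm.
Qed.


Hypothesis Asym : forall i j, A i j = A j i.
Hypothesis Adiag : forall i, A i i = 0.

Definition flip (i : 'I_n) (w : config n) : config n :=
  [ffun j => if j == i then ~~ w j else w j].

Lemma flipK i : involutive (flip i).
Proof. by move=> w; apply/ffunP => j; rewrite !ffunE; case: eqP => // _; exact: negbK. Qed.

Lemma sp_flip_i i w : sp (flip i w) i = - sp w i.
Proof. by rewrite /sp ffunE eqxx; case: (w i); rewrite /spin ?opprK. Qed.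

Lemma sp_flip_j i j w : j != i -> sp (flip i w) j = sp w j.
Proof. by move=> h; rewrite /sp ffunE (negbTE h). Qed.

Definition mm w i := \sum_(j < n) A i j * sp w j.
Definition mmx w k j := \sum_(l < n | l != j) A k l * sp w l.

Lemma mm_split w k j : mm w k = mmx w k j + A k j * sp w j.
Proof. by rewrite /mm (bigD1 j) //= addrC. Qed.

Lemma mmx_flip w k j : mmx (flip j w) k j = mmx w k j.
Proof. by apply: eq_bigr => l hl; rewrite sp_flip_j. Qed.

Lemma mm_flip w i : mm (flip i w) i = mm w i.
Proof. by rewrite !(mm_split _ i i) Adiag !mul0r mmx_flip. Qed.

Definition gg w i := tanh (beta * mm w i + c i).
Definition UU w i := sp w i - gg w i.

Definition Qr i w := \sum_(j < n | j != i) \sum_(k < n | k != i) sp w j * A j k * sp w k.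
Definition Lr i w := \sum_(j < n | j != i) c j * sp w j.

Lemma Qf_split i w : Qf w = Qr i w + 2 * (sp w i * mm w i).
Proof.
rewrite /Qf (bigD1 i) //=.
have e1 : \sum_(k < n) sp w i * A i k * sp w k = sp w i * mm w i.
  by rewrite /mm mulr_sumr; apply: eq_bigr => k _; rewrite mulrA.
rewrite e1.
rewrite (eq_bigr (fun j => sp w j * A j i * sp w i + \sum_(k < n | k != i) sp w j * A j k * sp w k)); last first.
  by move=> j _; rewrite (bigD1 i).
rewrite big_split /= -/(Qr i w).
have e2 : \sum_(j < n | j != i) sp w j * A j i * sp w i = sp w i * mm w i.
  rewrite (mm_split w i i) Adiag mul0r addr0 /mmx mulr_sumr; apply: eq_bigr => j _.
  by rewrite (Asym j i); ring.
rewrite e2; ring.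
Qed.

Lemma Qr_flip i w : Qr i (flip i w) = Qr i w.
Proof. by apply: eq_bigr => j hj; apply: eq_bigr => k hk; rewrite !sp_flip_j. Qed.

Lemma Lf_split i w : Lf w = Lr i w + c i * sp w i.
Proof. by rewrite /Lf (bigD1 i) //= addrC. Qed.

Lemma Lr_flip i w : Lr i (flip i w) = Lr i w.
Proof. by apply: eq_bigr => j hj; rewrite sp_flip_j. Qed.

Lemma wt_split i w : wt w = expR (beta / 2 * Qr i w + Lr i w) * expR (sp w i * (beta * mm w i + c i)).
Proof. rewrite /wt -expRD (Qf_split i) (Lf_split i); congr expR; by field. Qed.

Lemma Ex_U0 i h : (forall w, h (flip i w) = h w) -> Ex (fun w => UU w i * h w) = 0.
Proof.
move=> hh; rewrite /Ex.
set F := fun w => wt w * (UU w i * h w).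
suff -> : \sum_w F w = 0 by rewrite mul0r.
have e : \sum_w F w = \sum_w F (flip i w).
  by apply: reindex_inj; apply: inv_inj; exact: flipK.
have e2 : forall w, F w + F (flip i w) = 0.
  move=> w; rewrite /F !(wt_split i) Qr_flip Lr_flip sp_flip_i mm_flip /UU sp_flip_i /gg mm_flip hh.
  set K := expR _; set x := beta * mm w i + c i.
  suff H : expR (sp w i * x) * (sp w i - tanh x) + expR (- sp w i * x) * (- sp w i - tanh x) = 0.
    transitivity (K * h w * (expR (sp w i * x) * (sp w i - tanh x) + expR (- sp w i * x) * (- sp w i - tanh x))).
      ring.
    by rewrite H mulr0.
  have p1 := expR_gt0 x; have p2 := expR_gt0 (- x).
  rewrite /sp /spin; case: (w i); rewrite ?mul1r ?mulN1r ?opprK ?mul1r /tanh; field; by rewrite gt_eqF // addr_gt0.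
have : \sum_w F w + \sum_w F w = 0.
  by rewrite {2}e -big_split /=; apply: big1 => w _; apply: e2.
lra.
Qed.


Hypothesis Apos : forall i j, 0 <= A i j.
Hypothesis beta0 : 0 <= beta.

Lemma sp_norm w i : `|sp w i| = 1.
Proof. by rewrite /sp /spin; case: (w i); rewrite ?normrN normr1. Qed.

Lemma gg_norm w i : `|gg w i| <= 1.
Proof. exact: tanh_le1. Qed.

Lemma UU_norm w i : `|UU w i| <= 2.
Proof.
apply: le_trans (ler_normB _ _) _; rewrite sp_norm.
by have := gg_norm w i; lra.
Qed.

Lemma cov_off j k : j != k -> `|Ex (fun w => UU w j * UU w k)| <= 2 * beta * A k j.
Proof.
move=> jk.
pose gt w := tanh (beta * mmx w k j + c k).
have e : forall w, UU w j * UU w k = UU w j * (sp w k - gt w) - UU w j * (gg w k - gt w).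
  by move=> w; rewrite /UU; ring.
rewrite (Ex_ext _ _ e) ExB Ex_U0; last first.
  by move=> w; rewrite sp_flip_j 1?eq_sym // /gt mmx_flip.
rewrite sub0r normrN.
apply: le_trans (Ex_norm _) _.
rewrite -[X in _ <= X](Ex_cst (2 * beta * A k j)); apply: Ex_le => w.
rewrite normrM -mulrA; apply: ler_pM => //; first exact: UU_norm.
rewrite /gg /gt; apply: le_trans (tanh_lip _ _ _) _.
have -> : beta * mm w k + c k - (beta * mmx w k j + c k) = beta * (A k j * sp w j).
  by rewrite (mm_split w k j); ring.
by rewrite normrM normrM sp_norm mulr1 !ger0_norm.
Qed.

Lemma cov_bound j k : `|Ex (fun w => UU w j * UU w k)| <= (j == k)%:R * 4 + 2 * beta * A j k.
Proof.
case: (eqVneq j k) => [<-|jk].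
  rewrite mul1r; apply: le_trans (Ex_norm _) _.
  have h : 0 <= 2 * beta * A j j by rewrite !mulr_ge0.
  apply: le_trans (_ : Ex (fun _ => 4) <= _); last by rewrite Ex_cst lerDl.
  apply: Ex_le => w; rewrite normrM.
  have := UU_norm w j; have := normr_ge0 (UU w j); nra.
by rewrite mul0r add0r Asym; apply: cov_off.
Qed.

Definition uu w i := \sum_(j < n) A i j * UU w j.

Lemma Eu2 i : Ex (fun w => uu w i ^+ 2) <=
  4 * \sum_(j < n) A i j ^+ 2 + 2 * beta * \sum_(j < n) \sum_(k < n) A i j * A i k * A j k.
Proof.
have e : forall w, uu w i ^+ 2 = \sum_(j < n) \sum_(k < n) (A i j * A i k) * (UU w j * UU w k).
  move=> w; rewrite expr2 /uu mulr_suml; apply: eq_bigr => j _; rewrite mulr_sumr.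
  by apply: eq_bigr => k _; ring.
rewrite (Ex_ext _ _ e) Ex_sum.
apply: le_trans (_ : _ <= \sum_(j < n) \sum_(k < n) (A i j * A i k) * ((j == k)%:R * 4 + 2 * beta * A j k)) _.
  apply: ler_sum => j _; rewrite Ex_sum; apply: ler_sum => k _.
  rewrite ExZ; apply: le_trans (ler_norm _) _; rewrite normrM ger0_norm ?mulr_ge0 //.
  by apply: ler_wpM2l; [rewrite mulr_ge0 | apply: cov_bound].
rewrite mulr_sumr mulr_sumr -big_split /=; apply: ler_sum => j _.
rewrite (eq_bigr (fun k => A i j * A i k * ((j == k)%:R * 4) + (2 * beta) * (A i j * A i k * A j k))); last first.
  by move=> k _; ring.
rewrite big_split /= -mulr_sumr lerD2r.
rewrite (bigD1 j) //= big1 ?addr0.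
  by rewrite eqxx /= mul1r expr2 le_eqVlt; apply/orP; left; apply/eqP; ring.
by move=> k kj; rewrite eq_sym (negbTE kj) mul0r mulr0.
Qed.



Variables (a al lam : R).
Hypothesis rowsum : forall i, \sum_(j < n) A i j <= a.
Hypothesis rowsq : forall i, \sum_(j < n) A i j ^+ 2 <= al.
Hypothesis a0 : 0 <= a.
Hypothesis al0 : 0 <= al.
Hypothesis hlam : 0 < lam < 1.
Hypothesis hba : beta * a <= lam.
Hypothesis beta1 : beta <= 1.

Lemma colsum j : \sum_(i < n) A i j <= a.
Proof. by rewrite (eq_bigr (fun i => A j i)) // => i _; rewrite Asym. Qed.

Lemma tau_bound i : \sum_(j < n) \sum_(k < n) A i j * A i k * A j k <= a * al.
Proof.
apply: le_trans (_ : _ <= \sum_(j < n) A i j * al) _.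
  apply: ler_sum => j _.
  rewrite (eq_bigr (fun k => A i j * (A i k * A j k))); last by move=> k _; rewrite mulrA.
  rewrite -mulr_sumr; apply: ler_wpM2l => //.
  apply: le_trans (_ : _ <= \sum_(k < n) (A i k ^+ 2 + A j k ^+ 2) / 2) _.
    apply: ler_sum => k _; have := sqr_ge0 (A i k - A j k); nra.
  rewrite -mulr_suml big_split /=; have := rowsq i; have := rowsq j; lra.
rewrite -mulr_suml mulrC [a * _]mulrC; apply: ler_wpM2l => //; exact: rowsum.
Qed.

Definition kap := 4 + 2 * beta * a.

Lemma kap_ge0 : 0 <= kap.
Proof. by rewrite /kap addr_ge0 // !mulr_ge0. Qed.

Lemma Eu2b i : Ex (fun w => uu w i ^+ 2) <= kap * al.
Proof.
have h1 := rowsq i; have h2 := tau_bound i; have h := Eu2 i.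
apply: le_trans h _; rewrite /kap.
have h3 := ler_wpM2l beta0 h2.
nra.
Qed.

Lemma Eu2_ge0 i : 0 <= Ex (fun w => uu w i ^+ 2).
Proof. by rewrite -(Ex_cst 0); apply: Ex_le => w; apply: sqr_ge0. Qed.

Lemma Aop f : \sum_(i < n) (\sum_(j < n) A i j * f j) ^+ 2 <= a ^+ 2 * \sum_(j < n) f j ^+ 2.
Proof.
apply: le_trans (_ : _ <= \sum_(i < n) a * \sum_(j < n) A i j * f j ^+ 2) _.
  apply: ler_sum => i _; apply: le_trans (wCS (A i) f (fun j => Apos i j)) _.
  apply: ler_wpM2r; last exact: rowsum.
  by apply: sumr_ge0 => j _; rewrite mulr_ge0 ?sqr_ge0.
rewrite -mulr_sumr exchange_big /= expr2 -mulrA; apply: ler_wpM2l => //.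
rewrite mulr_sumr; apply: ler_sum => j _.
rewrite -mulr_suml; apply: ler_wpM2r; [exact: sqr_ge0 | exact: colsum].
Qed.

Definition tt i := tanh (c i).
Definition sig i := \sum_(j < n) A i j * tt j.
Definition vv w i := \sum_(j < n) A i j * (gg w j - tt j).

Lemma mm_dec w i : mm w i = vv w i + (uu w i + sig i).
Proof. by rewrite /mm /vv /uu /sig -!big_split; apply: eq_bigr => j _; rewrite /UU /=; ring. Qed.

Lemma gg_lip w j : `|gg w j - tt j| <= beta * `|mm w j|.
Proof.
rewrite /gg /tt; apply: le_trans (tanh_lip _ _ _) _.
by rewrite addrK normrM ger0_norm.
Qed.

Lemma vv_le w i : `|vv w i| <= \sum_(j < n) A i j * (beta * `|mm w j|).
Proof.
apply: le_trans (ler_norm_sum _ _ _) _; apply: ler_sum => j _.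
rewrite normrM ger0_norm //; apply: ler_wpM2l => //; exact: gg_lip.
Qed.

Lemma sq_le (p q : R) : `|p| <= q -> p ^+ 2 <= q ^+ 2.
Proof. by move=> h; have := normr_ge0 p; rewrite -real_normK ?num_real //; nra. Qed.

Lemma vv_sq w : \sum_(i < n) vv w i ^+ 2 <= lam ^+ 2 * \sum_(i < n) mm w i ^+ 2.
Proof.
apply: le_trans (_ : _ <= \sum_(i < n) (\sum_(j < n) A i j * (beta * `|mm w j|)) ^+ 2) _.
  by apply: ler_sum => i _; apply: sq_le; apply: vv_le.
apply: le_trans (Aop _) _.
rewrite (eq_bigr (fun j => beta ^+ 2 * mm w j ^+ 2)); last first.
  by move=> j _; rewrite exprMn real_normK ?num_real.
rewrite -mulr_sumr mulrA; apply: ler_wpM2r; first by apply: sumr_ge0 => j _; apply: sqr_ge0.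
rewrite -exprMn mulrC; apply: sq_le; rewrite ger0_norm // mulr_ge0 //.
Qed.

Lemma hl0 : 0 < lam. Proof. by case/andP: hlam. Qed.
Lemma hD0 : 0 < 1 - lam. Proof. by case/andP: hlam => _ h; rewrite subr_gt0. Qed.

Lemma sq2 (p q : R) : (p + q) ^+ 2 <= 2 * (p ^+ 2 + q ^+ 2).
Proof. have := sqr_ge0 (p - q); nra. Qed.

Lemma msum_pt w : \sum_(i < n) mm w i ^+ 2 <=
  2 * (\sum_(i < n) uu w i ^+ 2 + \sum_(i < n) sig i ^+ 2) / (1 - lam) ^+ 2.
Proof.
apply: le_trans (contract (fun i => mm w i) (fun i => vv w i) (fun i => uu w i + sig i) lam hlam _ (vv_sq w)) _.
  by move=> i; rewrite mm_dec; apply: ler_normD.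
apply: ler_wpM2r; first by rewrite invr_ge0 exprn_ge0 // ltW // hD0.
rewrite -big_split mulr_sumr; apply: ler_sum => i _; exact: sq2.
Qed.

Definition C1' := \sum_(i < n) sig i ^+ 2.

Lemma part_a : Ex (fun w => \sum_(i < n) mm w i ^+ 2) <=
  2 * (n%:R * (kap * al) + C1') / (1 - lam) ^+ 2.
Proof.
apply: le_trans (Ex_le _ _ msum_pt) _.
set D := (1 - lam) ^+ 2.
have e : forall w, 2 * (\sum_(i < n) uu w i ^+ 2 + C1') / D =
   (2 / D) * (\sum_(i < n) uu w i ^+ 2) + 2 * C1' / D.
  by move=> w; rewrite mulrDr mulrDl mulrAC.
rewrite (Ex_ext _ _ e) ExD (ExZ (2 / D) (fun w => \sum_(i < n) uu w i ^+ 2)) (Ex_sum (fun i w => uu w i ^+ 2)) Ex_cst.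
rewrite mulrDr mulrDl [2 * C1' / D]mulrAC lerD2r.
rewrite [X in _ <= X]mulrAC; apply: ler_wpM2l; first by rewrite divr_ge0 // exprn_ge0 // ltW // hD0.
apply: le_trans (_ : _ <= \sum_(i < n) kap * al) _.
  by apply: ler_sum => i _; apply: Eu2b.
by rewrite sumr_const card_ord mulr_natl.
Qed.


Definition ee i := Ex (fun w => mm w i ^+ 2).

Lemma ee_ge0 i : 0 <= ee i.
Proof. by rewrite /ee -(Ex_cst 0); apply: Ex_le => w; apply: sqr_ge0. Qed.

Definition kk := a * beta ^+ 2 / lam.

Lemma vv2 w i : vv w i ^+ 2 <= a * beta ^+ 2 * \sum_(j < n) A i j * mm w j ^+ 2.
Proof.
apply: le_trans (sq_le _ _ (vv_le w i)) _.
apply: le_trans (wCS (A i) (fun j => beta * `|mm w j|) (fun j => Apos i j)) _.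
rewrite -mulrA; apply: ler_pM.
- by apply: sumr_ge0 => j _.
- by apply: sumr_ge0 => j _; rewrite mulr_ge0 ?sqr_ge0.
- exact: rowsum.
rewrite mulr_sumr; apply: ler_sum => j _.
by rewrite exprMn real_normK ?num_real // mulrCA.
Qed.

Lemma m2_pt w i : mm w i ^+ 2 <= kk * \sum_(j < n) A i j * mm w j ^+ 2 +
   2 / (1 - lam) * (uu w i ^+ 2 + sig i ^+ 2).
Proof.
rewrite [X in X ^+ 2 <= _]mm_dec; apply: le_trans (sq_split _ _ lam hlam) _.
apply: lerD.
  rewrite /kk [X in _ <= X]mulrAC; apply: ler_wpM2r; first by rewrite invr_ge0 ltW // hl0.
  exact: vv2.
have H := sq2 (uu w i) (sig i).
apply: le_trans (ler_wpM2r _ H) _; first by rewrite invr_ge0 ltW // hD0.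
by rewrite mulrAC.
Qed.

Lemma kk_ge0 : 0 <= kk.
Proof. by rewrite /kk divr_ge0 ?mulr_ge0 ?sqr_ge0 // ltW // hl0. Qed.

Definition qq i := 2 / (1 - lam) * (Ex (fun w => uu w i ^+ 2) + sig i ^+ 2).

Lemma ee_bound i : ee i <= kk * \sum_(j < n) A i j * ee j + qq i.
Proof.
apply: le_trans (Ex_le _ _ (fun w => m2_pt w i)) _.
rewrite ExD (ExZ kk (fun w => \sum_(j < n) A i j * mm w j ^+ 2)).
rewrite (Ex_sum (fun j w => A i j * mm w j ^+ 2)).
rewrite (ExZ (2 / (1 - lam)) (fun w => uu w i ^+ 2 + sig i ^+ 2)) ExD Ex_cst.
rewrite /qq lerD2r; apply: ler_wpM2l; first exact: kk_ge0.
by apply: ler_sum => j _; rewrite ExZ.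
Qed.

Lemma qq_ge0 i : 0 <= qq i.
Proof.
rewrite /qq mulr_ge0 ?addr_ge0 ?sqr_ge0 ?Eu2_ge0 //.
by rewrite divr_ge0 // ltW // hD0.
Qed.

Lemma ee_sq : \sum_(i < n) ee i ^+ 2 <= (\sum_(i < n) qq i ^+ 2) / (1 - lam) ^+ 2.
Proof.
apply: (contract ee (fun i => kk * \sum_(j < n) A i j * ee j) qq lam hlam).
  move=> i; rewrite (ger0_norm (ee_ge0 i)) (ger0_norm (qq_ge0 i)).
  apply: le_trans (ee_bound i) _; rewrite lerD2r; exact: ler_norm.
rewrite (eq_bigr (fun i => kk ^+ 2 * (\sum_(j < n) A i j * ee j) ^+ 2)); last first.
  by move=> i _; rewrite exprMn.
rewrite -mulr_sumr; apply: le_trans (ler_wpM2l (exprn_ge0 2 kk_ge0) (Aop ee)) _.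
rewrite mulrA -exprMn; apply: ler_wpM2r; first by apply: sumr_ge0 => i _; apply: sqr_ge0.
apply: sq_le; rewrite ger0_norm ?mulr_ge0 ?kk_ge0 //.
have hl := hl0.
have h1 : 0 <= beta * a by rewrite mulr_ge0.
have h2 : (beta * a) ^+ 2 <= lam ^+ 2 by apply: sq_le; rewrite ger0_norm.
rewrite /kk mulrAC ler_pdivrMr //.
have -> : a * beta ^+ 2 * a = (beta * a) ^+ 2 by rewrite exprMn; ring.
  by rewrite -expr2. by rewrite invr_ge0; apply: ltW; apply: hl0.
Qed.

Lemma sig_le i : `|sig i| <= a.
Proof.
apply: le_trans (ler_norm_sum _ _ _) _; apply: le_trans (rowsum i).
apply: ler_sum => j _; rewrite normrM ger0_norm //.
by apply: ler_piMr => //; apply: tanh_le1.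
Qed.

Lemma qq_sq i : qq i ^+ 2 <= (2 / (1 - lam)) ^+ 2 * (2 * ((kap * al) ^+ 2 + a ^+ 2 * sig i ^+ 2)).
Proof.
rewrite /qq exprMn; apply: ler_wpM2l; first exact: sqr_ge0.
have hE0 := Eu2_ge0 i; have hE1 := Eu2b i.
set E := Ex _ in hE0 hE1 *.
have hk : 0 <= kap * al by rewrite mulr_ge0 ?kap_ge0.
have hs : sig i ^+ 2 <= a ^+ 2 by apply: sq_le; exact: sig_le.
have hs0 := sqr_ge0 (sig i).
apply: le_trans (sq2 _ _) _; apply: ler_wpM2l => //.
apply: lerD.
  by apply: sq_le; rewrite ger0_norm.
by rewrite [X in X <= _]expr2; apply: ler_wpM2r.
Qed.

Lemma ee_final : \sum_(i < n) ee i ^+ 2 <=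
  (2 / (1 - lam)) ^+ 2 * (2 * (n%:R * (kap * al) ^+ 2 + a ^+ 2 * C1')) / (1 - lam) ^+ 2.
Proof.
apply: le_trans ee_sq _; apply: ler_wpM2r; first by rewrite invr_ge0 exprn_ge0 // ltW // hD0.
apply: le_trans (ler_sum _ (fun i _ => qq_sq i)) _.
rewrite -mulr_sumr; apply: ler_wpM2l; first exact: sqr_ge0.
rewrite -mulr_sumr; apply: ler_wpM2l => //.
rewrite big_split /= sumr_const card_ord mulr_natl /C1' mulr_sumr.
by [].
Qed.




Definition del i := Ex (fun w => sp w i) - tt i.

Lemma Ex_sp i : Ex (fun w => sp w i) = Ex (fun w => gg w i).
Proof.
have e : forall w, sp w i = UU w i * 1 + gg w i by move=> w; rewrite mulr1 /UU subrK.
by rewrite (Ex_ext _ _ e) ExD Ex_U0 // add0r.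
Qed.

Lemma Ex_mm i : Ex (fun w => mm w i) = sig i + \sum_(j < n) A i j * del j.
Proof.
rewrite /mm (Ex_sum (fun j w => A i j * sp w j)) /sig -big_split /=.
by apply: eq_bigr => j _; rewrite ExZ /del; ring.
Qed.

Lemma del_bound i : `|del i| <= `|beta * \sum_(j < n) A i j * del j| + `|beta * `|sig i| + 2 * ee i|.
Proof.
pose Rr w := gg w i - tt i - (1 - tt i ^+ 2) * (beta * mm w i).
have e : forall w, gg w i = ((1 - tt i ^+ 2) * beta) * mm w i + (Rr w + tt i).
  by move=> w; rewrite /Rr; ring.
have hR : forall w, `|Rr w| <= 2 * mm w i ^+ 2.
  move=> w; rewrite /Rr /gg /tt (addrC (beta * mm w i)).
  apply: le_trans (tanh_taylor _ _ _) _; apply: ler_wpM2l => //.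
  rewrite exprMn; apply: ler_piMl; first exact: sqr_ge0.
  by rewrite expr2; apply: mulr_ile1.
have -> : del i = ((1 - tt i ^+ 2) * beta) * Ex (fun w => mm w i) + Ex Rr.
  rewrite /del Ex_sp (Ex_ext _ _ e) ExD (ExZ _ (fun w => mm w i)) (ExD Rr (fun _ => tt i)) Ex_cst; ring.
have ht : `|1 - tt i ^+ 2| <= 1.
  have := tanh_le1 _ (c i); rewrite -/(tt i) ler_norml => /andP[p q].
  rewrite ler_norml; apply/andP; split; nra.
have hE : `|Ex Rr| <= 2 * ee i.
  apply: le_trans (Ex_norm _) _; rewrite /ee -ExZ; apply: Ex_le => w; exact: hR.
rewrite (ger0_norm (_ : 0 <= beta * `|sig i| + 2 * ee i)); last first.
  by apply: addr_ge0; apply: mulr_ge0 => //; apply: ee_ge0.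
rewrite Ex_mm; apply: le_trans (ler_normD _ _) _.
rewrite addrA lerD //.
rewrite normrM normrM (ger0_norm beta0).
apply: le_trans (_ : _ <= beta * `|sig i + \sum_(j < n) A i j * del j|) _.
  by rewrite -mulrA; apply: ler_piMl => //; rewrite mulr_ge0.
rewrite normrM (ger0_norm beta0) -mulrDr; apply: ler_wpM2l => //.
by rewrite addrC; apply: ler_normD.
Qed.

Lemma del_sq : \sum_(i < n) del i ^+ 2 <=
  (\sum_(i < n) (beta * `|sig i| + 2 * ee i) ^+ 2) / (1 - lam) ^+ 2.
Proof.
apply: (contract del (fun i => beta * \sum_(j < n) A i j * del j) (fun i => beta * `|sig i| + 2 * ee i) lam hlam).
  exact: del_bound.
rewrite (eq_bigr (fun i => beta ^+ 2 * (\sum_(j < n) A i j * del j) ^+ 2)); last first.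
  by move=> i _; rewrite exprMn.
rewrite -mulr_sumr; apply: le_trans (ler_wpM2l (exprn_ge0 2 beta0) (Aop del)) _.
rewrite mulrA -exprMn; apply: ler_wpM2r; first by apply: sumr_ge0 => i _; apply: sqr_ge0.
by apply: sq_le; rewrite ger0_norm ?mulr_ge0.
Qed.

Lemma del_final : \sum_(i < n) del i ^+ 2 <=
  (2 * C1' + 8 * \sum_(i < n) ee i ^+ 2) / (1 - lam) ^+ 2.
Proof.
apply: le_trans del_sq _; apply: ler_wpM2r; first by rewrite invr_ge0 exprn_ge0 // ltW // hD0.
rewrite /C1' !mulr_sumr -big_split /=; apply: ler_sum => i _.
apply: le_trans (sq2 _ _) _.
have h1 : (beta * `|sig i|) ^+ 2 <= sig i ^+ 2.
  rewrite exprMn real_normK ?num_real //; apply: ler_piMl; first exact: sqr_ge0.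
  by rewrite expr2; apply: mulr_ile1.
have h2 : (2 * ee i) ^+ 2 = 4 * ee i ^+ 2 by ring.
rewrite h2; lra.
Qed.

Lemma Ex_lin (d : 'I_n -> R) : Ex (fun w => \sum_(i < n) d i * (sp w i - tt i)) = \sum_(i < n) d i * del i.
Proof.
rewrite (Ex_sum (fun i w => d i * (sp w i - tt i))); apply: eq_bigr => i _.
by rewrite ExZ ExB Ex_cst.
Qed.

Lemma part_b (d : 'I_n -> R) :
  `|Ex (fun w => \sum_(i < n) d i * (sp w i - tt i))| <=
  Num.sqrt (\sum_(i < n) d i ^+ 2) * Num.sqrt (\sum_(i < n) del i ^+ 2).
Proof.
rewrite Ex_lin -sqrtrM; last by apply: sumr_ge0 => i _; apply: sqr_ge0.
rewrite -sqrtr_sqr; apply: ler_wsqrtr; exact: CS.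
Qed.


Hypothesis a2 : a <= 2.
Definition uD := (1 - lam)^-1.

Lemma uD_gt0 : 0 < uD. Proof. by rewrite /uD invr_gt0 hD0. Qed.

Lemma kap_le8 : kap <= 8.
Proof. rewrite /kap; have h := ler_wpM2r a0 beta1; rewrite mul1r in h. have h2 := a2. lra. Qed.

Lemma C1_ge0 : 0 <= C1'.
Proof. by apply: sumr_ge0 => i _; apply: sqr_ge0. Qed.

Lemma fin_a : Ex (fun w => \sum_(i < n) mm w i ^+ 2) <= 16 * uD ^+ 2 * (n%:R * al + C1').
Proof.
apply: le_trans part_a _.
have hn : 0 <= n%:R :> R by [].
have hk := kap_ge0; have hk8 := kap_le8; have hC := C1_ge0.
have h1 : n%:R * (kap * al) <= n%:R * (8 * al).
  by apply: ler_wpM2l => //; apply: ler_wpM2r.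
rewrite -exprVn -/uD.
have hu : 0 <= uD ^+ 2 by apply: exprn_ge0; apply: ltW; apply: uD_gt0.
have h2 : 0 <= n%:R * al by rewrite mulr_ge0.
apply: le_trans (_ : _ <= 16 * (n%:R * al + C1') * uD ^+ 2) _.
  by apply: ler_wpM2r => //; lra.
by rewrite mulrAC.
Qed.

Definition Kb := (2 + 4096 * uD ^+ 4) * uD ^+ 2.

Lemma fin_del : \sum_(i < n) del i ^+ 2 <= Kb * (n%:R * al ^+ 2 + C1').
Proof.
have hn : 0 <= n%:R :> R by [].
have hk := kap_ge0; have hk8 := kap_le8; have hC := C1_ge0.
have hu0 : 0 < uD := uD_gt0.
set X := n%:R * al ^+ 2 + C1'.
have hX : 0 <= X by rewrite addr_ge0 // mulr_ge0 // sqr_ge0.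
have hY : n%:R * (kap * al) ^+ 2 + a ^+ 2 * C1' <= 64 * X.
  have e1 : (kap * al) ^+ 2 <= (8 * al) ^+ 2.
    by apply: sq_le; rewrite ger0_norm ?mulr_ge0 //; apply: ler_wpM2r.
  have e2 : a ^+ 2 <= 4 by have := a0; have := a2; nra.
  have e3 := ler_wpM2l hn e1.
  have e4 := ler_wpM2r hC e2.
  have e5 : n%:R * (8 * al) ^+ 2 = 64 * (n%:R * al ^+ 2) by ring. rewrite e5 in e3. rewrite /X.
  have : 0 <= n%:R * al ^+ 2 by rewrite mulr_ge0 ?sqr_ge0.
  lra.
have hE : \sum_(i < n) ee i ^+ 2 <= 512 * uD ^+ 4 * X.
  apply: le_trans ee_final _.
  rewrite -exprVn -/uD.
  apply: le_trans (_ : _ <= (2 / (1 - lam)) ^+ 2 * (2 * (64 * X)) * uD ^+ 2) _.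
    apply: ler_wpM2r; first by rewrite exprn_ge0 // ltW.
    apply: ler_wpM2l; first exact: sqr_ge0.
    by apply: ler_wpM2l.
  rewrite -/uD; rewrite le_eqVlt; apply/orP; left; apply/eqP; rewrite /uD; ring.
apply: le_trans del_final _.
rewrite -exprVn -/uD.
have hC1X : C1' <= X by rewrite /X lerDr mulr_ge0 ?sqr_ge0.
apply: le_trans (_ : _ <= (2 * X + 8 * (512 * uD ^+ 4 * X)) * uD ^+ 2) _.
  apply: ler_wpM2r; first by rewrite exprn_ge0 // ltW.
  by apply: lerD; [apply: ler_wpM2l | apply: ler_wpM2l].
by rewrite le_eqVlt; apply/orP; left; apply/eqP; rewrite /Kb; ring.
Qed.

Lemma fin_b (d : 'I_n -> R) :
  `|Ex (fun w => \sum_(i < n) d i * (sp w i - tt i))| <=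
  Num.sqrt (\sum_(i < n) d i ^+ 2) * Num.sqrt (Kb * (n%:R * al ^+ 2 + C1')).
Proof.
apply: le_trans (part_b d) _; apply: ler_wpM2l; first exact: sqrtr_ge0.
apply: ler_wsqrtr; exact: fin_del.
Qed.

End Model.


Lemma bigmax_ge (R: realType) n (F : 'I_n -> R) i : F i <= \big[Num.max/0]_(j < n) F j.
Proof. by rewrite (bigD1 i) //= le_max lexx. Qed.
Lemma bigmax_ge0 (R: realType) n (F : 'I_n -> R) : 0 <= \big[Num.max/0]_(j < n) F j.
Proof. by elim/big_rec: _ => // i x _ hx; rewrite le_max hx orbT. Qed.


Arguments uD {R}. Arguments Kb {R}. Arguments Ex {R}. Arguments mm {R}. Arguments C1' {R}.
Arguments fin_a {R n beta A}. Arguments fin_b {R n beta A}. Arguments mm_split {R}.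

Lemma mxsym (R : realType) n (A : 'M[R]_n) : A^T = A -> forall i j, A i j = A j i.
Proof. by move=> h i j; rewrite -[in LHS]h mxE. Qed.

Theorem mainTheorem13 (R : realType) (beta : R) (hb0 : 0 <= beta) (hb1 : beta < 1) :
  exists C : R, 0 < C /\
  forall (A : forall n : nat, 'M[R]_n),
    (forall n, admissible (A n)) ->
    ((fun n => infnorm (A n)) @ \oo --> (1 : R)) ->
    exists N : nat, forall n : nat, (N <= n)%N ->
      forall (d : nat) (theta : 'rV[R]_d) (X : 'I_n -> 'rV[R]_d),
        rfim_E beta (A n) theta X (fun w => \sum_(i < n) (mloc (A n) w i) ^+ 2)
          <= C * (n%:R * alphaA (A n) + C1 (A n) theta X)
        /\
        forall dv : 'I_n -> R,
          `| rfim_E beta (A n) theta X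
               (fun w => \sum_(i < n) dv i * (spin R (w i) - tanh (dotp theta (X i)))) |
          <= C * enorm dv * (1 + Num.sqrt (n%:R * alphaA (A n) ^+ 2)
                               + Num.sqrt (C1 (A n) theta X)).
Proof.
pose lam := (1 + beta) / 2.
have hlam : 0 < lam < 1 by apply/andP; split; rewrite /lam; lra.
have hu : 0 < uD lam by rewrite /uD invr_gt0 subr_gt0; case/andP: hlam.
have hKb : 0 <= Kb lam.
  rewrite /Kb; apply: mulr_ge0; last exact: (exprn_ge0 _ (ltW hu)).
  apply: addr_ge0; first exact: ler0n.
  apply: mulr_ge0; first exact: ler0n.
  exact: (exprn_ge0 _ (ltW hu)).
pose C := 16 * uD lam ^+ 2 + Kb lam + 1.
have hCa : 0 <= 16 * uD lam ^+ 2.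
  by apply: mulr_ge0; [exact: ler0n | exact: (exprn_ge0 _ (ltW hu))].
have hC1 : 1 <= C by rewrite /C; lra.
exists C; split; first by lra.
move=> A hA hcvg.
have he : 0 < (1 - beta) / 2 by lra.
move/cvgrPdist_lt: hcvg => /(_ _ he) [N _ HN].
exists N => n hn d theta X.
have Ha : `|1 - infnorm (A n)| < (1 - beta) / 2 by apply: HN.
have [Hsym [Hpos Hdiag]] := hA n.
have Asym := mxsym _ _ _ Hsym.
have rowsum : forall i, \sum_(j < n) A n i j <= infnorm (A n).
  move=> i; rewrite /infnorm; apply: le_trans (bigmax_ge _ _ _ i).
  by rewrite le_eqVlt; apply/orP; left; apply/eqP; apply: eq_bigr => j _; rewrite ger0_norm.
have rowsq : forall i, \sum_(j < n) A n i j ^+ 2 <= alphaA (A n).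
  by move=> i; rewrite /alphaA; apply: (bigmax_ge _ _ (fun i => \sum_(j < n) A n i j ^+ 2) i).
have a0 : 0 <= infnorm (A n) by apply: bigmax_ge0.
have al0 : 0 <= alphaA (A n) by apply: bigmax_ge0.
have Hub : infnorm (A n) <= 1 + (1 - beta) / 2.
  move: Ha; rewrite ltr_norml => /andP[p q]; lra.
have hba : beta * infnorm (A n) <= lam.
  have := ler_wpM2l hb0 Hub; rewrite /lam => h; nra.
have beta1 : beta <= 1 by lra.
have a2 : infnorm (A n) <= 2 by lra.
pose c := fun i => dotp theta (X i).
have HA := fin_a c Asym Hdiag Hpos hb0 _ _ _ rowsum rowsq a0 al0 hlam hba beta1 a2.
have HB := fin_b c Asym Hdiag Hpos hb0 _ _ _ rowsum rowsq a0 al0 hlam hba beta1 a2.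
have hX : 0 <= n%:R * alphaA (A n) + C1' n (A n) c.
  by rewrite addr_ge0 ?mulr_ge0 //; apply: sumr_ge0 => i _; apply: sqr_ge0.
split.
  have -> : rfim_E beta (A n) theta X (fun w => \sum_(i < n) (mloc (A n) w i) ^+ 2) =
            Ex n beta (A n) c (fun w => \sum_(i < n) mm n (A n) w i ^+ 2).
    apply: Ex_ext => w; apply: eq_bigr => i _.
    by rewrite (mm_split _ _ w i i) Hdiag mul0r addr0.
  apply: le_trans HA _; apply: ler_wpM2r => //.
  by rewrite /C; lra.
move=> dv.
have := HB dv; rewrite /enorm => H.
apply: le_trans H _.
set s1 := Num.sqrt (n%:R * alphaA (A n) ^+ 2).
set s2 := Num.sqrt (C1 (A n) theta X).
have hs1 : 0 <= s1 := sqrtr_ge0 _.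
have hs2 : 0 <= s2 := sqrtr_ge0 _.
have e1 : s1 ^+ 2 = n%:R * alphaA (A n) ^+ 2 by rewrite sqr_sqrtr // mulr_ge0 // sqr_ge0.
have e2 : s2 ^+ 2 = C1 (A n) theta X by rewrite sqr_sqrtr //; apply: sumr_ge0 => i _; apply: sqr_ge0.
rewrite [C * _]mulrC -[X in _ <= X]mulrA; apply: ler_wpM2l; first exact: sqrtr_ge0.
have hT : 0 <= C * (1 + s1 + s2) by rewrite mulr_ge0 //; lra.
rewrite -[X in _ <= X](ger0_norm hT) -sqrtr_sqr; apply: ler_wsqrtr.
rewrite (_ : C1' n (A n) c = s2 ^+ 2) // -e1.
have hKC : Kb lam <= C ^+ 2 by rewrite expr2; rewrite /C; nra.
have hY : s1 ^+ 2 + s2 ^+ 2 <= (1 + s1 + s2) ^+ 2 by nra.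
rewrite exprMn; apply: ler_pM => //.
  by rewrite addr_ge0 // sqr_ge0.
Qed.
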